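(* Let $\mathbf{X},\mathbf{Y},\mathbf{Z}$ be finite non-empty sets and let $P$ be a positive probability measure on $\mathbf{X}\times\mathbf{Y}\times\mathbf{Z}$. Let $(X_n,Y_n,Z_n)$, $n=1,\dots,N$, be independent random elements of $\mathbf{X}\times\mathbf{Y}\times\mathbf{Z}$, each distributed according to $P$, with $N\ge1$ fixed. Fix $\delta>0$, $\tilde x\in\mathbf{X}$ and $y\in\mathbf{Y}$, and define the parameter \[ P(y\mid\mathrm{do}(\tilde x)):=\sum_{z\in\mathbf{Z}}P(Z=z\mid X=\tilde x)\sum_{x\in\mathbf{X}}P(Y=y\mid X=x,Z=z)\,P(X=x). \] Let $K:=|\mathbf{X}||\mathbf{Z}|+|\mathbf{X}|+|\mathbf{Z}|$, \[ m:=\sum_{z\in\mathbf{Z}}\hat p(z\mid\tilde x)\sum_{x\in\mathbf{X}}\hat p(y\mid x,z)\,\hat p(x), \] \[ h:=|\mathbf{X}||\mathbf{Z}|\sqrt{\frac{\ln\frac{2K}{\delta}}{2N}}+|\mathbf{X}||\mathbf{Z}|\sqrt{\frac{\ln\frac{2K}{\delta}}{2\,\#\tilde x}}+\sum_{x\in\mathbf{X},z\in\mathbf{Z}}\sqrt{\frac{\ln\frac{2K}{\delta}}{2\,\#xz}}, \] with $h:=\infty$ if any of the counts in the denominators is $0$. Then $\mathbb{P}\bigl(P(y\mid\mathrm{do}(\tilde x))\in[m-h,m+h]\bigr)\ge1-\delta$.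
   Context: Counting notation: $\#x:=|\{n\in[N]:X_n=x\}|$, $\#xz:=|\{n\in[N]:(X_n,Z_n)=(x,z)\}|$, $\#xyz:=|\{n\in[N]:(X_n,Y_n,Z_n)=(x,y,z)\}|$. Estimates: $\hat p(x):=\#x/N$, $\hat p(z\mid\tilde x):=\#\tilde x z/\#\tilde x$, $\hat p(y\mid x,z):=\#xyz/\#xz$. The parameter is the causal effect of $X$ on $Y$ when a set of variables $Z$ of a causal dag satisfies Pearl's front-door criterion relative to $(X,Y)$ ($Z$ may be a tuple of variables, $\mathbf{Z}$ the product of their domains); the claim concerns only the displayed quantity. *)

(* Defs.v *)
From HB Require Import structures.
From mathcomp Require Import all_boot all_order all_algebra.
From mathcomp Require Import reals exp.
Set Implicit Arguments. Unset Strict Implicit. Unset Printing Implicit Defensive.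
Import Order.TTheory GRing.Theory Num.Theory.
Local Open Scope ring_scope.

Section FrontDoor.
Variables (R : realType) (X Y Z : finType).

Definition positive_prob (P : X * Y * Z -> R) : Prop :=
  (forall t, 0 < P t) /\ \sum_t P t = 1.

Definition PX (P : X * Y * Z -> R) (x : X) : R :=
  \sum_(t | t.1.1 == x) P t.
Definition PXZ (P : X * Y * Z -> R) (x : X) (z : Z) : R :=
  \sum_(t | (t.1.1 == x) && (t.2 == z)) P t.
Definition PZ_given_X (P : X * Y * Z -> R) (z : Z) (x : X) : R :=
  PXZ P x z / PX P x.
Definition PY_given_XZ (P : X * Y * Z -> R) (y : Y) (x : X) (z : Z) : R :=
  P (x, y, z) / PXZ P x z.

Definition front_door (P : X * Y * Z -> R) (xt : X) (y : Y) : R :=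
  \sum_(z : Z) PZ_given_X P z xt *
    \sum_(x : X) PY_given_XZ P y x z * PX P x.

Variable N : nat.
Definition sample := {ffun 'I_N -> X * Y * Z}.

Definition sample_prob (P : X * Y * Z -> R) (s : sample) : R :=
  \prod_(n < N) P (s n).
Definition Prob (P : X * Y * Z -> R) (E : pred sample) : R :=
  \sum_(s | E s) sample_prob P s.

Definition cnt_x (s : sample) (x : X) : nat := #|[set n | (s n).1.1 == x]|.
Definition cnt_xz (s : sample) (x : X) (z : Z) : nat :=
  #|[set n | ((s n).1.1 == x) && ((s n).2 == z)]|.
Definition cnt_xyz (s : sample) (x : X) (y : Y) (z : Z) : nat :=
  #|[set n | s n == (x, y, z)]|.

Definition hp_x (s : sample) (x : X) : R := (cnt_x s x)%:R / N%:R.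
Definition hp_z_given_x (s : sample) (z : Z) (x : X) : R :=
  (cnt_xz s x z)%:R / (cnt_x s x)%:R.
Definition hp_y_given_xz (s : sample) (y : Y) (x : X) (z : Z) : R :=
  (cnt_xyz s x y z)%:R / (cnt_xz s x z)%:R.

Definition m_est (s : sample) (xt : X) (y : Y) : R :=
  \sum_(z : Z) hp_z_given_x s z xt *
    \sum_(x : X) hp_y_given_xz s y x z * hp_x s x.

Definition Kconst : nat := #|X| * #|Z| + #|X| + #|Z|.

(* finite half-width h (only meaningful when all counts are positive) *)
Definition h_width (delta : R) (s : sample) (xt : X) : R :=
  let L := ln (2 * Kconst%:R / delta) in
  (#|X| * #|Z|)%:R * Num.sqrt (L / (2 * N%:R))
  + (#|X| * #|Z|)%:R * Num.sqrt (L / (2 * (cnt_x s xt)%:R))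
  + \sum_(x : X) \sum_(z : Z) Num.sqrt (L / (2 * (cnt_xz s x z)%:R)).

(* h = +oo iff some count in a denominator is 0 (N >= 1 is assumed) *)
Definition h_infinite (s : sample) (xt : X) : bool :=
  (cnt_x s xt == 0)%N || [exists x, exists z, cnt_xz s x z == 0%N].

Definition covers (P : X * Y * Z -> R) (delta : R) (xt : X) (y : Y)
    (s : sample) : bool :=
  h_infinite s xt ||
  ((m_est s xt y - h_width delta s xt <= front_door P xt y)
   && (front_door P xt y <= m_est s xt y + h_width delta s xt)).

End FrontDoor.

(* Main.v *)
Require Import Defs.
From HB Require Import structures.
From mathcomp Require Import all_boot all_order all_algebra.
From mathcomp Require Import reals exp.
From mathcomp Require Import boolp classical_sets functions topology normedtype sequences derive realfun.
From mathcomp Require Import ring lra zify.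
Import Order.TTheory GRing.Theory Num.Theory numFieldNormedType.Exports.
Local Open Scope ring_scope.

Section Calc.
Variable R : realType.

Lemma deriv_mono (f df : R -> R) (a x : R) :
  (forall y : R, is_derive y 1 f (df y)) -> (forall c, a <= c -> 0 <= df c) ->
  a <= x -> f a <= f x.
Proof.
move=> fd dpos ax.
have [|c cab E] := @MVT_segment R f df a x ax.
- apply/continuous_subspaceT=> r.
  apply/differentiable_continuous/derivable1_diffP.
  by have [] := fd r.
rewrite -subr_ge0 E.
apply: mulr_ge0; last by rewrite subr_ge0.
by apply: dpos; move: cab; rewrite in_itv /= => /andP[].
Qed.

Lemma exp_pade (x : R) : 0 <= x -> (2 - x) * expR x <= 2 + x.
Proof.
move=> x0.
pose f : R -> R := (cst 2 + id) - (cst 2 - id) * expR.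
have H : f 0 <= f x.
  apply: (@deriv_mono f (fun t => 1 - (1 - t) * expR t)) => //.
    move=> t; rewrite /f.
    apply: is_derive_eq.
    rewrite !fctE /cst /= /GRing.scale /=; ring.
  move=> c _; rewrite subr_ge0.
  have h := expR_ge1Dx (- c).
  rewrite expRN in h.
  have ec := expR_gt0 c.
  have := ler_pM2r ec (1 - c) (expR c)^-1.
  rewrite mulVf ?gt_eqF // => ->.
  exact: h.
move: H; rewrite /f !fctE /cst /= expR0; lra.
Qed.


Lemma exp_B (q l : R) : 0 <= q <= 1 -> 0 <= l ->
  4 * q * (1 - q) * (expR l - 1) <= l * (q * expR l + 1 - q).
Proof.
move=> /andP[q0 q1] l0.
have e1 : 1 <= expR l by rewrite -expR0 ler_expR.
have [l4|l4] := leP 4 l.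
  have : 4 * q * (1 - q) * (expR l - 1) <= 4 * q * expR l.
    rewrite -mulrA ler_wpM2l ?mulr_ge0 //; nra.
  have qe : 0 <= q * expR l by rewrite mulr_ge0 // expR_ge0.
  have : 4 * (q * expR l) <= l * (q * expR l) by rewrite ler_wpM2r.
  have : 0 <= l * (1 - q) by rewrite mulr_ge0 // subr_ge0.
  nra.
have h := exp_pade (l / 2) (divr_ge0 l0 (ler0n _ 2)).
have e2 : expR l = expR (l/2) * expR (l/2) by rewrite -expRD; congr expR; field.
have p2 := expR_gt0 (l/2).
set E := expR (l/2) in h e2 p2.
set a := expR l - 1.
have ha : a * (4 - l) ^+ 2 <= 16 * l.
  have h2 : (4 - l) * E <= 4 + l by nra.
  have h3 : ((4 - l) * E) ^+ 2 <= (4 + l) ^+ 2.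
    by rewrite ler_sqr ?nnegrE; nra.
  rewrite /a e2; nra.
have a0 : 0 <= a by rewrite /a subr_ge0.
have -> : expR l = a + 1 by rewrite /a subrK.
rewrite -/a.
have [a00|ap] := eqVneq a 0.
  rewrite a00; nra.
have ap' : 0 < a by rewrite lt_def ap a0.
have key : 0 <= 16 * a * (l * (1 + q * a) - 4 * q * (1 - q) * a).
  have -> : 16 * a * (l * (1 + q * a) - 4 * q * (1 - q) * a) =
     (8 * q * a - a * (4 - l)) ^+ 2 + a * (16 * l - a * (4 - l) ^+ 2) by ring.
  rewrite addr_ge0 ?sqr_ge0 // mulr_ge0 // subr_ge0 //.
have : 0 <= l * (1 + q * a) - 4 * q * (1 - q) * a.
  by rewrite -(pmulr_rge0 _ (_ : 0 < 16 * a)) ?mulrA // mulr_gt0.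
nra.
Qed.


Lemma hoeff_lemma (q l : R) : 0 <= q <= 1 -> 0 <= l ->
  q * expR (l * (1 - q)) + (1 - q) * expR (- (l * q)) <= expR (l ^+ 2 / 8).
Proof.
move=> q01 l0.
pose h : R -> R := - (cst q * id + id ^+ 2 * cst (8^-1)).
pose g : R -> R := - ((cst q * expR + cst (1 - q)) * (expR \o h)).
have H : g 0 <= g l.
  apply: (@deriv_mono g (fun t => - expR (h t) *
      (q * expR t - (q + t / 4) * (q * expR t + 1 - q)))) => //.
    move=> t; rewrite /g.
    apply: is_derive_eq.
    by rewrite /h !fctE /cst /= /GRing.scale /=; field.
  move=> c c0.
  have hB := @exp_B q c q01 c0.
  have hX : q * expR c - (q + c / 4) * (q * expR c + 1 - q) <= 0.
    have -> : q * expR c - (q + c / 4) * (q * expR c + 1 - q) =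
      (4 * q * (1 - q) * (expR c - 1) - c * (q * expR c + 1 - q)) / 4 by field.
    by rewrite pmulr_lle0 ?invr_gt0 // subr_le0.
  have := expR_gt0 (h c).
  nra.
move: H; rewrite /g /h !fctE /cst /=.
have -> : - (q * 0 + 0 ^+ 2 / 8) = 0 :> R by rewrite expr0n /=; ring.
rewrite expR0 mulr1 lerN2.
have -> : q * 1 + (1 - q) = 1 :> R by ring.
move=> H.
have e3 : expR (l * (1 - q)) = expR l * expR (- (l * q)).
  by rewrite -expRD; congr expR; ring.
have e4 : expR (- (q * l + l ^+ 2 / 8)) * expR (l ^+ 2 / 8) = expR (- (l * q)).
  by rewrite -expRD; congr expR; ring.
rewrite e3 -e4.
have -> : q * (expR l * (expR (- (q * l + l ^+ 2 / 8)) * expR (l ^+ 2 / 8))) +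
  (1 - q) * (expR (- (q * l + l ^+ 2 / 8)) * expR (l ^+ 2 / 8)) =
  ((q * expR l + (1 - q)) * expR (- (q * l + l ^+ 2 / 8))) * expR (l ^+ 2 / 8) by ring.
by rewrite -[X in _ <= X]mul1r ler_wpM2r ?expR_ge0.
Qed.
End Calc.


Lemma exp_tail (R : realType) (l a D : R) : 0 <= l -> a < `|D| ->
  1 <= (expR (l * D) + expR (- l * D)) * expR (- (l * a)).
Proof.
move=> l0 aD.
have ge1 (u : R) : 0 <= u -> 1 <= expR u by move=> u0; rewrite -expR0 ler_expR.
rewrite mulrDl.
have [D0|D0] := leP 0 D.
  rewrite ger0_norm // in aD.
  have : 1 <= expR (l * D) * expR (- (l * a)).
    by rewrite -expRD ge1 // -mulrN -mulrDr mulr_ge0 // subr_ge0 ltW.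
  have := expR_ge0 (- l * D) ; have := expR_ge0 (- (l * a)); nra.
rewrite ltr0_norm // in aD.
have : 1 <= expR (- l * D) * expR (- (l * a)).
  rewrite -expRD ge1 //.
  have -> : - l * D + - (l * a) = l * (- D - a) by ring.
  by rewrite mulr_ge0 // subr_ge0 ltW.
have := expR_ge0 (l * D) ; have := expR_ge0 (- (l * a)); nra.
Qed.

Section Prob.
Variables (R : realType) (X Y Z : finType) (N : nat) (P : X * Y * Z -> R).
Hypothesis P0 : forall t, 0 <= P t.
Hypothesis P1 : \sum_t P t = 1.
Local Notation T := (X * Y * Z)%type.
Local Notation S := (sample X Y Z N).
Local Notation mu := (sample_prob (N:=N) P).

Lemma mu_ge0 s : 0 <= mu s.
Proof. by rewrite /sample_prob; apply: prodr_ge0 => n _. Qed.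

Lemma mu_sum : \sum_(s : S) mu s = 1.
Proof.
rewrite /sample_prob -(bigA_distr_bigA (fun (n : 'I_N) (t : T) => P t)) /=.
by rewrite big1 // => n _; rewrite P1.
Qed.

Lemma prod_split (A : {set 'I_N}) (g : pred T) (w : T -> R) :
  \sum_(s : S | [set n | g (s n)] == A) mu s * \prod_(n in A) w (s n)
  = (\sum_(t | g t) P t * w t) ^+ #|A| * (\sum_(t | ~~ g t) P t) ^+ (N - #|A|).
Proof.
pose phi (n : 'I_N) (t : T) := if n \in A then (g t)%:R * (P t * w t)
                              else (~~ g t)%:R * P t.
transitivity (\sum_(s : S) \prod_n phi n (s n)).
  rewrite big_mkcond /=; apply: eq_bigr => s _.
  case: eqP => [E|neq].
    have gE n : g (s n) = (n \in A) by rewrite -E inE.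
    rewrite /sample_prob.
    rewrite [RHS](eq_bigr (fun n => P (s n) * (if n \in A then w (s n) else 1)));
      last first.
      move=> n _; rewrite /phi gE; case: (n \in A) => /=; rewrite ?mul1r //.
      by rewrite mulr1.
    by rewrite big_split /= -big_mkcond.
  have [n0 Hn0] : exists n, g (s n) != (n \in A).
    case: (boolP [exists n, g (s n) != (n \in A)]) => [/existsP //|/existsPn H].
    exfalso; apply: neq; apply/setP => n; rewrite inE; exact/eqP/negbNE/H.
  rewrite (bigD1 n0) //= /phi.
  by move: Hn0; case: (g _); case: (n0 \in A) => //= _; rewrite !mul0r.
rewrite -(bigA_distr_bigA phi) /=.
rewrite (bigID (fun n => n \in A)) /=.
rewrite (eq_bigr (fun=> \sum_(t | g t) P t * w t)); last first.
  move=> n nA; rewrite /phi nA [RHS]big_mkcond /=; apply: eq_bigr => t _.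
  by case: (g t); rewrite ?mul1r ?mul0r.
rewrite [X in _ * X](eq_bigr (fun=> \sum_(t | ~~ g t) P t)); last first.
  move=> n /negbTE nA; rewrite /phi nA [RHS]big_mkcond /=; apply: eq_bigr => t _.
  by case: (g t); rewrite ?mul1r ?mul0r.
rewrite !prodr_const; congr (_ * _ ^+ _).
have e : #|[pred n | n \notin A]| = #|~: A| by apply: eq_card => n; rewrite !inE.
have := cardsC A; rewrite card_ord e.
by move: (#|~: A|) (#|A|) => a b <-; rewrite addKn.
Qed.


Lemma mgf_bound (pg pgf l : R) : 0 < pg -> 0 <= pgf <= pg -> 0 <= l ->
  pgf * expR (l * (1 - pgf / pg)) + (pg - pgf) * expR (- (l * (pgf / pg)))
  <= pg * expR (l ^+ 2 / 8).
Proof.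
move=> pg0 /andP[f0 fg] l0.
set q := pgf / pg.
have q01 : 0 <= q <= 1.
  apply/andP; split; first by rewrite /q divr_ge0 // ltW.
  by rewrite /q ler_pdivrMr // mul1r.
have e1 : pgf = pg * q by rewrite /q mulrC divfK // gt_eqF.
have e2 : pg - pgf = pg * (1 - q) by rewrite e1; ring.
have -> : pgf * expR (l * (1 - q)) + (pg - pgf) * expR (- (l * q)) =
  pg * (q * expR (l * (1 - q)) + (1 - q) * expR (- (l * q))).
  by rewrite e2 [in LHS]e1; ring.
rewrite ler_pM2l //.
exact: hoeff_lemma.
Qed.

Definition badE (g f : pred T) (L : R) (s : S) : bool :=
  let c := #|[set n | g (s n)]| in
  (0 < c)%N && (Num.sqrt (L / (2 * c%:R)) <
     `| (#|[set n | g (s n) && f (s n)]|)%:R / c%:R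
        - (\sum_(t | g t && f t) P t) / (\sum_(t | g t) P t) |).

Lemma count_A (A : {set 'I_N}) (g f : pred T) (s : S) :
  [set n | g (s n)] = A ->
  \sum_(n in A) ((f (s n))%:R : R) = (#|[set n | g (s n) && f (s n)]|)%:R.
Proof.
move=> E.
rewrite -natr_sum; congr (_ %:R).
rewrite -sum1_card [RHS](eq_bigl (fun n => (n \in A) && f (s n))); last first.
  by move=> n; rewrite -E !inE.
rewrite [RHS]big_mkcondr /=; apply: eq_bigr => n _.
by case: (f (s n)).
Qed.


Lemma hoeff_cond (g f : pred T) (L : R) : 0 <= L -> 0 < \sum_(t | g t) P t ->
  Prob P (badE g f L) <= 2 * expR (- L).
Proof.
move=> L0 pg0.
set pg := \sum_(t | g t) P t in pg0 *.
set pgf := \sum_(t | g t && f t) P t.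
set q := pgf / pg.
set B := \sum_(t | ~~ g t) P t.
have pgf0 : 0 <= pgf by apply: sumr_ge0.
have pgE : pg = pgf + \sum_(t | g t && ~~ f t) P t by rewrite /pg (bigID f).
have pgfg : pgf <= pg by rewrite pgE lerDl sumr_ge0.
have B0 : 0 <= B by apply: sumr_ge0.
have Mform (c : R) : \sum_(t | g t) P t * expR (c * ((f t)%:R - q)) =
    pgf * expR (c * (1 - q)) + (pg - pgf) * expR (c * (0 - q)).
  rewrite (bigID f) /=; congr (_ + _).
    by rewrite /pgf big_distrl; apply: eq_bigr => t /andP[_ ->].
  rewrite pgE addrC addKr big_distrl; apply: eq_bigr => t /andP[_ /negbTE ->].
  by [].
rewrite /Prob (partition_big (fun s : S => [set n | g (s n)]) predT) //=.
apply: le_trans (_ : _ <= \sum_(A : {set 'I_N}) 2 * expR (- L) *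
   \sum_(s : S | [set n | g (s n)] == A) mu s) _; last first.
  rewrite -big_distrr /= le_eqVlt; apply/orP; left; apply/eqP.
  rewrite -[RHS]mulr1 -mu_sum; congr (_ * _).
  by rewrite [RHS](partition_big (fun s : S => [set n | g (s n)]) predT).
apply: ler_sum => A _.
have piA : \sum_(s : S | [set n | g (s n)] == A) mu s = pg ^+ #|A| * B ^+ (N - #|A|).
  have := prod_split A g (fun=> 1).
  rewrite (eq_bigr (fun t => P t)); last by move=> t _; rewrite mulr1.
  move=> <-; apply: eq_bigr => s _; by rewrite big1_eq mulr1.
rewrite piA.
have [k0|kpos] := posnP #|A|.
  rewrite big1; first by rewrite !mulr_ge0 // ?exprn_ge0 // ?expR_ge0 // ltW.
  move=> s /andP[b /eqP E]; exfalso; move: b; rewrite /badE /= E k0 //.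
set k := #|A| in kpos *.
have k0 : 0 < (k%:R : R) by rewrite ltr0n.
set t := Num.sqrt (L / (2 * k%:R)).
have t0 : 0 <= t by apply: sqrtr_ge0.
have tt : t ^+ 2 = L / (2 * k%:R) by rewrite sqr_sqrtr // divr_ge0 // mulr_ge0.
set l := 4 * t.
have l0 : 0 <= l by rewrite mulr_ge0.
pose Ep (c : R) (s : S) := \prod_(n in A) expR (c * ((f (s n))%:R - q)).
have EP c (s : S) : [set n | g (s n)] = A -> Ep c s =
   expR (c * ((#|[set n | g (s n) && f (s n)]|)%:R - k%:R * q)).
  move=> E; rewrite /Ep -expR_sum; congr expR.
  rewrite -mulr_sumr sumrB (count_A _ _ f _ E) sumr_const mulr_natl //.
apply: le_trans (_ : _ <= \sum_(s : S | [set n | g (s n)] == A)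
    (mu s * Ep l s + mu s * Ep (- l) s) * expR (- (l * (k%:R * t)))) _.
  rewrite big_mkcondl /=; apply: ler_sum => s /eqP E.
  case: ifP => bad; last first.
    by rewrite mulr_ge0 ?expR_ge0 // addr_ge0 // mulr_ge0 ?mu_ge0 // prodr_ge0 // => n _; rewrite expR_ge0.
  rewrite !EP // -!mulrDr -mulrA -{1}[mu s]mulr1 ler_wpM2l ?mu_ge0 //.
  move: bad; rewrite /badE /= E => /andP[_ H].
  apply: exp_tail => //.
  set Sc := (#|[set n | g (s n) && f (s n)]|)%:R in H *.
  have -> : Sc - k%:R * q = (Sc / k%:R - q) * k%:R by field; rewrite gt_eqF.
  by rewrite normrM normr_nat [X in X < _]mulrC ltr_pM2r.
rewrite -big_distrl /= big_split /=.
rewrite /Ep (prod_split A g (fun t => expR (l * ((f t)%:R - q)))).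
rewrite (prod_split A g (fun t => expR (- l * ((f t)%:R - q)))).
rewrite !Mform.
set E8 := expR (l ^+ 2 / 8).
have E80 : 0 <= E8 by apply: expR_ge0.
have pgg : 0 <= pgf <= pg by rewrite pgf0 pgfg.
have Mp : pgf * expR (l * (1 - q)) + (pg - pgf) * expR (l * (0 - q)) <= pg * E8.
  by rewrite sub0r mulrN; exact: mgf_bound.
have Mm : pgf * expR (- l * (1 - q)) + (pg - pgf) * expR (- l * (0 - q)) <= pg * E8.
  have pgg' : 0 <= pg - pgf <= pg by rewrite subr_ge0 pgfg lerBlDr lerDl pgf0.
  have := @mgf_bound pg (pg - pgf) l pg0 pgg' l0.
  have e1 : 1 - (pg - pgf) / pg = q by rewrite /q; field; rewrite gt_eqF.
  have e2 : (pg - pgf) / pg = 1 - q by rewrite /q; field; rewrite gt_eqF.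
  have e3 : pg - (pg - pgf) = pgf by ring.
  rewrite e1 e2 e3; have -> : - l * (0 - q) = l * q by ring.
  have -> : - l * (1 - q) = - (l * (1 - q)) by ring.
  by rewrite addrC.
have Mp0 : 0 <= pgf * expR (l * (1 - q)) + (pg - pgf) * expR (l * (0 - q)).
  by rewrite addr_ge0 // mulr_ge0 ?expR_ge0 // subr_ge0.
have Mm0 : 0 <= pgf * expR (- l * (1 - q)) + (pg - pgf) * expR (- l * (0 - q)).
  by rewrite addr_ge0 // mulr_ge0 ?expR_ge0 // subr_ge0.
have PE0 : 0 <= pg * E8 by rewrite mulr_ge0 // ltW.
have hp := lerXn2r k (x := _ + _) (y := pg * E8) (Mp0 : _ \is Num.nneg) (PE0 : _ \is Num.nneg) Mp.
have hm := lerXn2r k (x := _ + _) (y := pg * E8) (Mm0 : _ \is Num.nneg) (PE0 : _ \is Num.nneg) Mm.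
simpl in hp, hm.
have BN0 : 0 <= B ^+ (N - k) by apply: exprn_ge0.
apply: le_trans (_ : _ <= ((pg * E8) ^+ k * B ^+ (N - k) + (pg * E8) ^+ k * B ^+ (N - k))
   * expR (- (l * (k%:R * t)))) _.
  by rewrite ler_wpM2r ?expR_ge0 // lerD // ler_wpM2r.
have eE : E8 ^+ k * expR (- (l * (k%:R * t))) = expR (- L).
  rewrite /E8 -expRM_natl -expRD; congr expR.
  have -> : k%:R * (l ^+ 2 / 8) + - (l * (k%:R * t)) = - (2 * k%:R * t ^+ 2) by rewrite /l; field.
  by rewrite tt; field; rewrite gt_eqF.
rewrite le_eqVlt; apply/orP; left; apply/eqP.
rewrite -eE exprMn; ring.
Qed.

End Prob.

Lemma term_bound (R : realType) (a ah b bh p ph e1 e2 e3 : R) :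
  `|a - ah| <= e1 -> `|b - bh| <= e2 -> `|p - ph| <= e3 ->
  0 <= ah <= 1 -> 0 <= b <= 1 -> 0 <= bh <= 1 -> 0 <= p <= 1 ->
  `|a * b * p - ah * bh * ph| <= e3 + e1 + e2.
Proof.
move=> h1 h2 h3 /andP[ah0 ah1] /andP[b0 b1] /andP[bh0 bh1] /andP[p0 p1].
have -> : a * b * p - ah * bh * ph =
  (a - ah) * (b * p) + (b - bh) * (ah * p) + (p - ph) * (ah * bh) by ring.
have n1 : `|(a - ah) * (b * p)| <= e1.
  rewrite normrM (ger0_norm (mulr_ge0 b0 p0)).
  apply: le_trans h1; rewrite ler_piMr //; nra.
have n2 : `|(b - bh) * (ah * p)| <= e2.
  rewrite normrM (ger0_norm (mulr_ge0 ah0 p0)).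
  apply: le_trans h2; rewrite ler_piMr //; nra.
have n3 : `|(p - ph) * (ah * bh)| <= e3.
  rewrite normrM (ger0_norm (mulr_ge0 ah0 bh0)).
  apply: le_trans h3; rewrite ler_piMr //; nra.
apply: le_trans (ler_normD _ _) _.
have := ler_normD ((a - ah) * (b * p)) ((b - bh) * (ah * p)).
lra.
Qed.

Lemma det_bound (R : realType) (X Z : finType) (a ah : Z -> R) (b bh : X -> Z -> R)
  (p ph : X -> R) (e1 e3 : R) (e2 : X -> Z -> R) :
  (forall z, `|a z - ah z| <= e1) -> (forall x z, `|b x z - bh x z| <= e2 x z) ->
  (forall x, `|p x - ph x| <= e3) ->
  (forall z, 0 <= ah z <= 1) -> (forall x z, 0 <= b x z <= 1) ->
  (forall x z, 0 <= bh x z <= 1) -> (forall x, 0 <= p x <= 1) ->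
  `| \sum_z a z * \sum_x b x z * p x - \sum_z ah z * \sum_x bh x z * ph x |
  <= (#|X| * #|Z|)%:R * e3 + (#|X| * #|Z|)%:R * e1 + \sum_x \sum_z e2 x z.
Proof.
move=> h1 h2 h3 hah hb hbh hp.
rewrite -sumrB.
apply: le_trans (ler_norm_sum _ _ _) _.
apply: le_trans (_ : _ <= \sum_z \sum_x (e3 + e1 + e2 x z)) _.
  apply: ler_sum => z _.
  rewrite !big_distrr -sumrB /=.
  apply: le_trans (ler_norm_sum _ _ _) _.
  apply: ler_sum => x _.
  rewrite !mulrA; exact: term_bound.
rewrite (exchange_big _ _ _ _ _ (fun z x => e3 + e1 + e2 x z)) /=.
rewrite (eq_bigr (fun x => (e3 *+ #|Z| + e1 *+ #|Z|) + \sum_z e2 x z)); last first.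
  by move=> x _; rewrite !big_split /= !sumr_const.
rewrite !big_split /= !sumr_const -!mulrnA !mulr_natl mulnC.
by [].
Qed.

Section ProbU.
Variables (R : realType) (X Y Z : finType) (N : nat) (P : X * Y * Z -> R).
Hypothesis P0 : forall t, 0 <= P t.
Hypothesis P1 : \sum_t P t = 1.
Local Notation S := (sample X Y Z N).
Local Notation mu := (sample_prob (N:=N) P).
Let mu0 (s : S) : 0 <= mu s := @mu_ge0 R X Y Z N P P0 s.
Let musum : \sum_(s : S) mu s = 1 := @mu_sum R X Y Z N P P1.

Lemma Prob_ge0 (E : pred S) : 0 <= Prob P E.
Proof. by apply: sumr_ge0 => s _; exact: mu0. Qed.

Lemma Prob_le (E F : pred S) : (forall s, E s -> F s) -> Prob P E <= Prob P F.
Proof.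
move=> EF; rewrite /Prob big_mkcond [X in _ <= X]big_mkcond /=.
apply: ler_sum => s _; case: ifP => Es; first by rewrite EF.
by case: ifP => // _; exact: mu0.
Qed.

Lemma Prob_or (E F : pred S) :
  Prob P (fun s => E s || F s) <= Prob P E + Prob P F.
Proof.
rewrite /Prob big_mkcond [X in _ <= X + _]big_mkcond [X in _ <= _ + X]big_mkcond -big_split /=; apply: ler_sum => s _.
have m0 : 0 <= mu s by exact: mu0.
by case: (E s); case: (F s) => /=; lra.
Qed.

Lemma Prob_ex (I : finType) (E : I -> pred S) :
  Prob P (fun s => [exists i, E i s]) <= \sum_i Prob P (E i).
Proof.
rewrite /Prob big_mkcond (eq_bigr (fun i => \sum_s (if E i s then mu s else 0))); last first.
  by move=> i _; rewrite big_mkcond.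
rewrite exchange_big /=; apply: ler_sum => s _.
case: ifP => [/existsP[i Ei]|_]; last by apply: sumr_ge0 => i _; case: ifP => // _; exact: mu0.
rewrite (bigD1 i) //= Ei lerDl; apply: sumr_ge0 => j _; case: ifP => // _; exact: mu0.
Qed.

Lemma Prob_compl (E : pred S) : Prob P E = 1 - Prob P (fun s => ~~ E s).
Proof. by rewrite -musum (bigID E) /= addrK. Qed.


Lemma not_bad (g f : pred (X * Y * Z)) (L : R) (s : S) :
  (0 < #|[set n | g (s n)]|)%N -> ~~ @badE R X Y Z N P g f L s ->
  `| (#|[set n | g (s n) && f (s n)]|)%:R / (#|[set n | g (s n)]|)%:R
     - (\sum_(t | g t && f t) P t) / (\sum_(t | g t) P t) |
  <= Num.sqrt (L / (2 * (#|[set n | g (s n)]|)%:R)).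
Proof. by rewrite /badE /= => -> /=; rewrite leNgt. Qed.

Lemma pg_pos (g : pred (X * Y * Z)) t1 : (forall t, 0 < P t) -> g t1 ->
  0 < \sum_(t | g t) P t.
Proof.
move=> Pp gt1; rewrite (bigD1 t1) //=.
by apply: (lt_le_trans (Pp t1)); rewrite lerDl sumr_ge0.
Qed.

End ProbU.

Lemma ratio01 (R : realType) (a b : nat) : (a <= b)%N -> 0 <= (a%:R : R) / b%:R <= 1.
Proof.
move=> ab; apply/andP; split; first by rewrite divr_ge0.
have [b0|bp] := posnP b.
  by move: ab; rewrite b0 leqn0 => /eqP ->; rewrite mul0r.
by rewrite ler_pdivrMr ?ltr0n // mul1r ler_nat.
Qed.

Lemma rratio01 (R : realType) (a b : R) : 0 <= a <= b -> 0 <= a / b <= 1.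
Proof.
move=> /andP[a0 ab]; apply/andP; split; first by rewrite divr_ge0 // (le_trans a0).
have [b0|bp] := eqVneq b 0.
  by rewrite b0 invr0 mulr0.
have bp' : 0 < b by rewrite lt_def bp (le_trans a0).
by rewrite ler_pdivrMr // mul1r.
Qed.

Lemma pair_eqE (X Y Z : finType) (t : X * Y * Z) x y z :
  (t == (x, y, z)) = ((t.1.1 == x) && (t.2 == z)) && (t.1.2 == y).
Proof.
case: t => [[a b] c] /=; rewrite !xpair_eqE.
by case: (a == x); case: (b == y); case: (c == z).
Qed.


Theorem theorem2 (R : realType) (X Y Z : finType)
    (P : X * Y * Z -> R) (N : nat) (delta : R) (xt : X) (y : Y) :
  positive_prob P -> (1 <= N)%N -> 0 < delta ->
  1 - delta <= Prob (N:=N) P (covers P delta xt y).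
Proof.
move=> [Ppos P1] N1 d0.
have P0 t : 0 <= P t by apply: ltW.
have [d1|d1] := leP 1 delta.
  by apply: le_trans (@Prob_ge0 R X Y Z N P P0 _); rewrite subr_le0.
case: (pickP (@predT (X * Y * Z))) => [t0 _| h]; first last.
  by exfalso; move: P1; rewrite big_pred0 // => /eqP; rewrite eq_sym oner_eq0.
have X0 : (0 < #|X|)%N by apply/card_gt0P; exists t0.1.1.
have Z0 : (0 < #|Z|)%N by apply/card_gt0P; exists t0.2.
set K := Kconst X Z.
have K1 : (1 <= K)%N by rewrite /K /Kconst; lia.
have K0 : 0 < (K%:R : R) by rewrite ltr0n.
set L := ln (2 * K%:R / delta).
have KL : 1 <= 2 * K%:R / delta.
  rewrite ler_pdivlMr // mul1r; apply: le_trans (ltW d1) _.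
  have : (1 : R) <= K%:R by rewrite ler1n.
  lra.
have L0 : 0 <= L by apply: ln_ge0.
have eL : 2 * expR (- L) = delta / K%:R.
  rewrite expRN lnK; last by rewrite posrE (lt_le_trans ltr01).
  by field; rewrite !gt_eqF.
pose EA (x : X) := @badE R X Y Z N P predT (fun t => t.1.1 == x) L.
pose EB (z : Z) := @badE R X Y Z N P (fun t => t.1.1 == xt) (fun t => t.2 == z) L.
pose EC (x : X) (z : Z) := @badE R X Y Z N P (fun t => (t.1.1 == x) && (t.2 == z))
   (fun t => t.1.2 == y) L.
have hb (g f : pred (X * Y * Z)) t1 : g t1 ->
    Prob (N:=N) P (@badE R X Y Z N P g f L) <= delta / K%:R.
  move=> gt1; rewrite -eL; apply: hoeff_cond => //.
  exact: (pg_pos _ _ _ _ _ _ _ t1).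
have incl : forall s, ~~ covers P delta xt y s ->
    [|| [exists x, EA x s], [exists z, EB z s] | [exists x, [exists z, EC x z s]]].
  move=> s; rewrite /covers negb_or => /andP[nhi nb].
  apply/negPn/negP => nobad; move/negP: nb; apply.
  move: nobad; rewrite !negb_or => /and3P[/existsPn hA /existsPn hB /existsPn hC].
  move: nhi; rewrite /h_infinite negb_or => /andP[cx0 /existsPn hxz].
  have cxz x z : (0 < cnt_xz s x z)%N.
    by have := hxz x; move/existsPn/(_ z); rewrite lt0n.
  have cx : (0 < cnt_x s xt)%N by rewrite lt0n.
  have cN : #|[set n | predT (s n)]| = N.
    by rewrite -[RHS]card_ord; apply: eq_card => n; rewrite inE.
  rewrite -ler_distlC distrC /h_width /front_door /m_est /=.
  apply: det_bound.
  - move=> z.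
    have H := @not_bad R X Y Z N P (fun t => t.1.1 == xt) (fun t => t.2 == z) L s cx (hB z).
    by rewrite distrC; exact: H.
  - move=> x z.
    have := hC x; move/existsPn/(_ z) => hCxz.
    have H := @not_bad R X Y Z N P (fun t => (t.1.1 == x) && (t.2 == z))
       (fun t => t.1.2 == y) L s (cxz x z) hCxz.
    rewrite /= in H.
    have e1 : #|[set n | ((s n).1.1 == x) && ((s n).2 == z) && ((s n).1.2 == y)]|
       = cnt_xyz s x y z by apply: eq_card => n; rewrite !inE pair_eqE.
    have e2 : \sum_(t | (t.1.1 == x) && (t.2 == z) && (t.1.2 == y)) P t = P (x, y, z).
      by rewrite (eq_bigl (fun t => t == (x, y, z))) ?big_pred1_eq // => t; rewrite pair_eqE.
    rewrite e1 e2 in H.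
    by rewrite distrC; exact: H.
  - move=> x.
    have c0 : (0 < #|[set n | predT (s n)]|)%N by rewrite cN.
    have H := @not_bad R X Y Z N P predT (fun t => t.1.1 == x) L s c0 (hA x).
    have e : \sum_(t | predT t) P t = 1 by rewrite -P1.
    rewrite cN e divr1 in H.
    by rewrite distrC; exact: H.
  - move=> z; apply: ratio01; rewrite /cnt_xz /cnt_x; apply: subset_leq_card.
    by apply/fintype.subsetP => n; rewrite !inE => /andP[].
  - move=> x z; apply: rratio01; rewrite P0 /=.
    by rewrite /PXZ (bigD1 (x, y, z)) /= ?eqxx // lerDl sumr_ge0.
  - move=> x z; apply: ratio01; rewrite /cnt_xyz /cnt_xz; apply: subset_leq_card.
    by apply/fintype.subsetP => n; rewrite !inE pair_eqE => /andP[].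
  - move=> x; rewrite /PX sumr_ge0 //=.
    by rewrite -P1 [X in _ <= X](bigID (fun t => t.1.1 == x)) /= lerDl sumr_ge0.
rewrite (@Prob_compl R X Y Z N P P1) lerD2l lerN2.
apply: le_trans (@Prob_le R X Y Z N P P0 (fun s => ~~ covers P delta xt y s)
  (fun s => [|| [exists x, EA x s], [exists z, EB z s] | [exists x, [exists z, EC x z s]]]) incl) _.
apply: le_trans (@Prob_or R X Y Z N P P0 _ _) _.
apply: le_trans (lerD (lexx _) (@Prob_or R X Y Z N P P0 _ _)) _.
apply: le_trans (lerD (@Prob_ex R X Y Z N P P0 _ _) (lerD (@Prob_ex R X Y Z N P P0 _ _)
   (@Prob_ex R X Y Z N P P0 _ _))) _.
apply: le_trans (_ : _ <= \sum_(x : X) delta / K%:R + (\sum_(z : Z) delta / K%:R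
   + \sum_(x : X) \sum_(z : Z) delta / K%:R)) _.
  apply: lerD; last apply: lerD.
  - apply: ler_sum => x _; exact: (hb _ _ t0).
  - apply: ler_sum => z _; exact: (hb _ _ (xt, t0.1.2, t0.2)).
  - apply: ler_sum => x _; apply: le_trans (@Prob_ex R X Y Z N P P0 _ _) _.
    apply: ler_sum => z _; apply: (hb _ _ (x, t0.1.2, z)); by rewrite /= !eqxx.
rewrite !sumr_const -mulrnA -!mulrnDr -mulr_natl.
have -> : (#|X| + (#|Z| + #|Z| * #|X|))%N = K by rewrite /K /Kconst; lia.
rewrite le_eqVlt; apply/orP; left; apply/eqP; rewrite -mulr_natl; field; by rewrite gt_eqF.
Qed.
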